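(* Let $\alpha \in [0,1)$ and $\mathbf{x} \in \Omega$ be such that $\mathcal{F}(\{\mathbf{x}\}, \alpha)$ is nonempty. Then the highest value $B(\mathbf{x})$ assigned to $\mathbf{x}$ by any valid bound $B$, denoted $B^*(\mathbf{x})$, satisfies $$B^*(\mathbf{x}) = \min\{E[F] : F \in \mathcal{F}(\{\mathbf{x}\}, \alpha)\}.$$
   Context: Fix integers $m \ge 2$, $n \ge 1$ and reals $S_{\min} < S_{\max}$; $S = \{S_0,\dots,S_{m-1}\}$ with $S_k = S_{\min} + k\frac{S_{\max}-S_{\min}}{m-1}$. $\mathcal{F}$ is the set of probability distributions on $S$, identified with the probability simplex in $\mathbb{R}^m$ with the Euclidean topology; $E[F]$ is the mean. $\Omega$ is the set of samples of size $n$ from $S$, identified with their sorted versions. For $F \in \mathcal{F}$, $\mathbf{X}$ denotes a sample of $n$ i.i.d. draws from $F$, and $P_F[\Omega']$ is the probability that (sorted) $\mathbf{X}$ lies in $\Omega' \subseteq \Omega$. $\mathcal{G}(\Omega',\alpha) = \{F : P_F[\Omega'] > \alpha\}$ and $\mathcal{F}(\Omega',\alpha)$ is its closure in $\mathcal{F}$. A bound is a function $B : \Omega \to \mathbb{R}$; it is valid (at level $1-\alpha$) if $P_F[B(\mathbf{X}) \le E[F]] \ge 1 - \alpha$ for every $F \in \mathcal{F}$. *)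

(* Defs.v *)
From HB Require Import structures.
From mathcomp Require Import all_boot all_order all_algebra.
From mathcomp Require Import all_classical all_reals all_analysis.
Set Implicit Arguments. Unset Strict Implicit. Unset Printing Implicit Defensive.
Import Order.TTheory GRing.Theory Num.Theory.
Import numFieldNormedType.Exports.
Local Open Scope classical_set_scope.
Local Open Scope ring_scope.

Section Defs.
Variables (R : realType) (m n : nat) (Smin Smax : R).

Definition Spt (k : 'I_m) : R := Smin + k%:R * ((Smax - Smin) / (m.-1)%:R).

(* distributions on S, as points of the probability simplex in R^m *)
Definition simplex : set 'rV[R]_m :=
  [set F | (forall k, 0 <= F ord0 k) /\ \sum_(k < m) F ord0 k = 1].

Definition mean (F : 'rV[R]_m) : R := \sum_(k < m) F ord0 k * Spt k.

(* order on indices (equivalently on support values, as Smin < Smax) *)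
Definition ordle : rel 'I_m := fun i j => (i <= j)%N.

(* Omega: sorted samples of size n (as index tuples into S) *)
Definition Omega := {t : n.-tuple 'I_m | sorted ordle t}.

Lemma ordle_total : total ordle.
Proof. by move=> i j; rewrite /ordle leq_total. Qed.

Definition sort_sample (d : n.-tuple 'I_m) : Omega :=
  exist _ (sort_tuple ordle d) (sort_sorted ordle_total d).

Definition draw_prob (F : 'rV[R]_m) (d : n.-tuple 'I_m) : R :=
  \prod_(i < n) F ord0 (tnth d i).

Definition probF (F : 'rV[R]_m) (O' : {set Omega}) : R :=
  \sum_(d : n.-tuple 'I_m | sort_sample d \in O') draw_prob F d.

Definition Gset (O' : {set Omega}) (alpha : R) : set 'rV[R]_m :=
  [set F | simplex F /\ alpha < probF F O'].

Definition Fset (O' : {set Omega}) (alpha : R) : set 'rV[R]_m :=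
  closure (Gset O' alpha) `&` simplex.

Definition valid_bound (alpha : R) (B : Omega -> R) : Prop :=
  forall F, simplex F ->
    1 - alpha <= \sum_(d : n.-tuple 'I_m | B (sort_sample d) <= mean F) draw_prob F d.

End Defs.

(* Main.v *)
Require Import Defs.
From HB Require Import structures.
From mathcomp Require Import all_boot all_order all_algebra.
From mathcomp Require Import all_classical all_reals all_analysis.
Import Order.TTheory GRing.Theory Num.Theory.
Import numFieldNormedType.Exports.
Local Open Scope classical_set_scope.
Local Open Scope ring_scope.

From mathcomp Require Import ring lra.
Lemma sum_cont (R : realType) (T : topologicalType) (I : Type) (r : seq I) (P : pred I)
  (f : I -> T -> R) : (forall i, continuous (f i)) ->
  continuous (fun x => \sum_(i <- r | P i) f i x).
Proof.
move=> fc; elim: r => [|a r IH].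
  by under eq_fun do rewrite big_nil; exact: cst_continuous.
under eq_fun do rewrite big_cons.
case: (P a) => //.
move=> t; apply: cvgD; [exact: fc | exact: IH].
Qed.

Lemma mean_cont (R : realType) m (Smin Smax : R) : continuous (mean Smin Smax : 'rV[R]_m -> R).
Proof.
rewrite /mean; apply: sum_cont => k t.
have h1 := (@coord_continuous R 1 m ord0 k t).
have h2 := (@continuousM _ _ (fun F : 'rV[R]_m => F ord0 k) (fun=> Spt Smin Smax k) t h1 (@cst_continuous _ _ (Spt Smin Smax k) t)).

exact: h2.
Qed.

Lemma sum1_cont (R : realType) m : continuous (fun F : 'rV[R]_m => \sum_(k < m) F ord0 k).
Proof. by apply: sum_cont => k; exact: coord_continuous. Qed.

Lemma simplex_closed (R : realType) m : closed (simplex (R:=R) (m:=m)).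
Proof.
have -> : simplex (R:=R) (m:=m) = (\bigcap_(k in setT) ((fun F : 'rV[R]_m => F ord0 k) @^-1` [set y | 0 <= y]))
   `&` ((fun F : 'rV[R]_m => \sum_(k < m) F ord0 k) @^-1` [set y | y = 1]).
  by apply/seteqP; split => F /=; [case=> h1 h2; split => // k _; exact: h1 | case=> h1 h2; split => // k; exact: h1].
apply: closedI.
  apply: closed_bigI => k _; apply: preimage_closed; last exact: closed_ge.
  by move=> F _; exact: coord_continuous.
apply: preimage_closed; last exact: closed_eq.
by move=> F _; exact: sum1_cont.
Qed.

Lemma total_prob (R : realType) m n (F : 'rV[R]_m) : simplex F ->
  \sum_(d : n.-tuple 'I_m) draw_prob F d = 1.
Proof.
case=> _ h1.
have : \prod_(i < n) \sum_(k < m) F ord0 k = 1 by rewrite h1 big1.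
rewrite bigA_distr_bigA /= => <-.
rewrite (reindex (fun f : {ffun 'I_n -> 'I_m} => [tuple f i | i < n])) /=.
  by apply: eq_bigr => f _; rewrite /draw_prob; apply: eq_bigr => i _; rewrite tnth_mktuple.
exists (fun d => [ffun i => tnth d i]) => [f _|d _].
  by apply/ffunP => i; rewrite ffunE tnth_mktuple.
by apply: eq_from_tnth => i; rewrite tnth_mktuple ffunE.
Qed.

Lemma draw_prob_ge0 (R : realType) m n (F : 'rV[R]_m) (d : n.-tuple 'I_m) : simplex F ->
  0 <= draw_prob F d.
Proof. by case=> h0 _; apply: prodr_ge0 => i _; exact: h0. Qed.

Lemma sum_sub_le (R : realType) (T : finType) (P Q : pred T) (w : T -> R) :
  (forall t, 0 <= w t) -> (forall t, P t -> Q t) ->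
  \sum_(t | P t) w t <= \sum_(t | Q t) w t.
Proof.
move=> w0 PQ; rewrite [X in _ <= X](bigID P) /=.
rewrite -[X in X <= _]addr0 lerD //.
  by rewrite le_eqVlt; apply/orP; left; apply/eqP; apply: eq_bigl => t; case: (boolP (P t)) => Pt; rewrite ?andbT ?andbF //=; rewrite (PQ _ Pt).
by apply: sumr_ge0.
Qed.

Lemma compl_prob (R : realType) m n (F : 'rV[R]_m) (x : Omega m n) : simplex F ->
  \sum_(d : n.-tuple 'I_m | sort_sample d \notin [set x]%SET) draw_prob F d = 1 - probF F [set x].
Proof.
move=> hF; have := @total_prob R m n F hF.
rewrite (bigID (fun d => sort_sample d \in [set x]%SET)) /= /probF => <-.
by rewrite addrAC subrr add0r.
Qed.

Lemma Smin_le_mean (R : realType) m (Smin Smax : R) (F : 'rV[R]_m) :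
  Smin < Smax -> simplex F -> Smin <= mean Smin Smax F.
Proof.
move=> hS [h0 h1].
have e : Smin = \sum_(k < m) F ord0 k * Smin by rewrite -mulr_suml h1 mul1r.
rewrite {1}e /mean; apply: ler_sum => k _; apply: ler_wpM2l; first exact: h0.
rewrite /Spt lerDl; apply: mulr_ge0; first exact: ler0n.
by apply: divr_ge0; [rewrite subr_ge0 ltW | exact: ler0n].
Qed.

Lemma simplex_box (R : realType) m (F : 'rV[R]_m) : simplex F ->
  forall i, `[0, 1]%classic (F ord0 i).
Proof.
case=> h0 h1 i /=; rewrite in_itv /=; apply/andP; split; first exact: h0.
rewrite -h1 (bigD1 i) //= lerDl; apply: sumr_ge0 => j _; exact: h0.
Qed.

Theorem lemma6 (R : realType) (m n : nat) (Smin Smax : R)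
  (hm : (2 <= m)%N) (hn : (1 <= n)%N) (hS : Smin < Smax)
  (alpha : R) (halpha : 0 <= alpha < 1) (x : Omega m n)
  (hne : Fset [set x] alpha !=set0) :
  exists v : R,
    (* v = B*(x): the highest value assigned to x by a valid bound *)
    ((exists B : Omega m n -> R, valid_bound Smin Smax alpha B /\ B x = v) /\
     (forall B : Omega m n -> R, valid_bound Smin Smax alpha B -> B x <= v)) /\
    (* v = min { E[F] : F in F({x}, alpha) } *)
    ((exists F, Fset [set x] alpha F /\ mean Smin Smax F = v) /\
     (forall F, Fset [set x] alpha F -> v <= mean Smin Smax F)).
Proof.
set K := Fset [set x] alpha.
have Kcl : closed K by apply: closedI; [exact: closed_closure | exact: simplex_closed].
have Kco : compact K.
  have bc := (@rV_compact R m (fun=> `[0, 1]%classic) (fun _ => @segment_compact R 0 1)).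
  refine (subclosed_compact Kcl bc _).
  by move=> F [_ hF]; exact: simplex_box.
have [c cK cmin] := compact_EVT_min hne Kco (continuous_subspaceT (@mean_cont R m Smin Smax)).
have cK' : K c by rewrite inE in cK.
have cmin' : forall F, K F -> mean Smin Smax c <= mean Smin Smax F.
  by move=> F KF; apply: cmin; rewrite inE.
exists (mean Smin Smax c); split; last first.
  by split; [exists c | exact: cmin'].
case/andP: halpha => a0 a1.
split.
  exists (fun y => if y == x then mean Smin Smax c else Smin); split; last by rewrite eqxx.
  move=> F hF; case: (leP (mean Smin Smax c) (mean Smin Smax F)) => h.
    rewrite (eq_bigl (fun=> true)); first by rewrite (@total_prob R m n F hF) lerBlDr lerDl.
    move=> d /=; case: (sort_sample d == x) => //; exact: Smin_le_mean.
  have np : probF F [set x] <= alpha.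
    rewrite leNgt; apply/negP => hp.
    have KF : K F by split => //; apply: subset_closure; split.
    by move: (cmin' F KF); rewrite leNgt h.
  apply: (@le_trans _ _ (1 - probF F [set x])); first by rewrite lerB.
  rewrite -(@compl_prob R m n F x hF); apply: sum_sub_le => [d|d]; first exact: draw_prob_ge0.
  by rewrite inE => /negbTE ->; exact: Smin_le_mean.
move=> B hB; rewrite leNgt; apply/negP => hlt.
have nb : nbhs c [set F | mean Smin Smax F < B x].
  exact (@cvgr_lt R _ _ _ (mean Smin Smax) (mean Smin Smax c) (@mean_cont R m Smin Smax c) (B x) hlt).
case: cK' => ccl _.
case: (ccl _ nb) => F [[hF hp] hFB].
have := hB F hF.
apply/negP; rewrite -ltNge.
apply: (@le_lt_trans _ _ (1 - probF F [set x])); last by rewrite ltrD2l ltrN2.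
rewrite -(@compl_prob R m n F x hF); apply: sum_sub_le => [d|d]; first exact: draw_prob_ge0.
rewrite inE; apply: contraTN => /eqP ->; rewrite -ltNge; exact: hFB.
Qed.
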